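(* In the setting described in the context, the following two-sided estimates hold: $$|J(u)-J(u_h^{(2)})|-|\mathcal{R}^{(3)}-\mathcal{R}^{(3)(2)}|\le|\eta_h-\eta_h^{(2)}|\le|J(u)-J(u_h^{(2)})|+|\mathcal{R}^{(3)}-\mathcal{R}^{(3)(2)}|,$$ and $$|J(u)-J(\tilde u)|-|\rho(\tilde u)(\tilde z)|-|\mathcal{R}^{(3)}|\le|\eta_h|\le|J(u)-J(\tilde u)|+|\rho(\tilde u)(\tilde z)|+|\mathcal{R}^{(3)}|.$$
   Context: Let $U$ and $V$ be real Banach spaces with dual $V^*$. Let $\mathcal{A}:U\to V^*$ be a (nonlinear) operator that is three times continuously Fréchet differentiable, and let $J:U\to\mathbb{R}$ be three times continuously Fréchet differentiable. Notation: $\mathcal{A}(w)(v)$ is the value of $\mathcal{A}(w)\in V^*$ at $v\in V$. For fixed $v$, $\mathcal{A}'(w)(\varphi,v)$, $\mathcal{A}''(w)(\varphi,\psi,v)$ and $\mathcal{A}'''(w)(\varphi,\psi,\chi,v)$ denote the first, second and third Fréchet derivatives of $w\mapsto\mathcal{A}(w)(v)$ at $w$ in the directions $\varphi,\psi,\chi\in U$. Analogously, $J'(w)(\varphi)$ and $J'''(w)(\varphi,\psi,\chi)$ denote derivatives of $J$. Let $u\in U$ satisfy $\mathcal{A}(u)(v)=0$ for all $v\in V$, and let $z\in V$ satisfy $\mathcal{A}'(u)(\varphi,z)=J'(u)(\varphi)$ for all $\varphi\in U$. Let $U_h^{(2)}\subset U$ and $V_h^{(2)}\subset V$ be finite-dimensional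 subspaces. Let $u_h^{(2)}\in U_h^{(2)}$ satisfy $\mathcal{A}(u_h^{(2)})(v)=0$ for all $v\in V_h^{(2)}$. Let $z_h^{(2)}\in V_h^{(2)}$ satisfy $\mathcal{A}'(u_h^{(2)})(\varphi,z_h^{(2)})=J'(u_h^{(2)})(\varphi)$ for all $\varphi\in U_h^{(2)}$. Let $\tilde u\in U_h^{(2)}$ and $\tilde z\in V_h^{(2)}$ be arbitrary fixed elements. Define $\rho(\tilde u)(v):=-\mathcal{A}(\tilde u)(v)$ and $\rho^*(\tilde u,\tilde z)(\varphi):=J'(\tilde u)(\varphi)-\mathcal{A}'(\tilde u)(\varphi,\tilde z)$. With $e:=u-\tilde u$ and $e^*:=z-\tilde z$, define $$\mathcal{R}^{(3)}:=\frac12\int_0^1\Big[J'''(\tilde u+se)(e,e,e)-\mathcal{A}'''(\tilde u+se)(e,e,e,\tilde z+se^* )-3\mathcal{A}''(\tilde u+se)(e,e,e^* )\Big]s(s-1)\,ds.$$ Let $\mathcal{R}^{(3)(2)}$ be the same expression with $e,e^*,z$ replaced by $e^{(2)}:=u_h^{(2)}-\tilde u$, $e^{(2),*}:=z_h^{(2)}-\tilde z$, $z_h^{(2)}$. Define $$\eta_h:=\tfrac12\rho(\tilde u)(z-\tilde z)+\tfrac12\rho^*(\tilde u,\tilde z)(u-\tilde u),\qquad \eta_h^{(2)}:=\tfrac12\rho(\tilde u)(z_h^{(2)}-\tilde z)+\tfrac12\rho^*(\tilde u,\tilde z)(u_h^{(2)}-\tilde u).$$ *)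

(* Defs.v *)
From Stdlib Require Import Reals.
From Coquelicot Require Import Coquelicot.
Open Scope R_scope.

Definition subspace {E : ModuleSpace R_Ring} (S : E -> Prop) : Prop :=
  S zero /\ (forall x y, S x -> S y -> S (plus x y)) /\
  (forall (a : R) x, S x -> S (scal a x)).

Definition fin_dim_subspace {E : ModuleSpace R_Ring} (S : E -> Prop) : Prop :=
  subspace S /\
  exists (n : nat) (b : nat -> E),
    forall x, S x <-> exists c : nat -> R, x = sum_n (fun i => scal (c i) (b i)) n.

Definition rho {U V : NormedModule R_AbsRing} (A : U -> V -> R) (ut : U) (v : V) : R :=
  - A ut v.

Definition rho_star {U V : NormedModule R_AbsRing} (J1 : U -> U -> R)
  (A1 : U -> U -> V -> R) (ut : U) (zt : V) (phi : U) : R :=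
  J1 ut phi - A1 ut phi zt.

Definition eta {U V : NormedModule R_AbsRing} (A : U -> V -> R) (J1 : U -> U -> R)
  (A1 : U -> U -> V -> R) (ut : U) (zt : V) (u : U) (z : V) : R :=
  / 2 * rho A ut (minus z zt) + / 2 * rho_star J1 A1 ut zt (minus u ut).

Definition R3 {U V : NormedModule R_AbsRing} (J3 : U -> U -> U -> U -> R)
  (A2 : U -> U -> U -> V -> R) (A3 : U -> U -> U -> U -> V -> R)
  (ut : U) (zt : V) (u : U) (z : V) : R :=
  let e := minus u ut in
  let es := minus z zt in
  / 2 * RInt (fun s =>
      (J3 (plus ut (scal s e)) e e e
       - A3 (plus ut (scal s e)) e e e (plus zt (scal s es))
       - 3 * A2 (plus ut (scal s e)) e e es) * (s * (s - 1))) 0 1.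

(* Main.v *)
Require Import Defs.
From Stdlib Require Import Reals Lra.
From Coquelicot Require Import Coquelicot.
Open Scope R_scope.



Lemma line_fd {U : NormedModule R_AbsRing} (p d : U) (s : R) :
  filterdiff (fun t : R => plus p (scal t d)) (locally s) (fun t => scal t d).
Proof.
  apply filterdiff_ext_lin with (fun t : R => plus zero (scal t d)).
  - apply (filterdiff_plus_fct (fun _ : R => p) (fun t : R => scal t d)).
    exact (@filterdiff_const R_AbsRing R_NormedModule U _ _ p).
    apply filterdiff_linear. exact (@is_linear_scal_l R_AbsRing U d).
  - intros; apply plus_zero_l.
Qed.

Lemma line_cont {U : NormedModule R_AbsRing} (p d : U) (s : R) :
  continuous (fun t : R => plus p (scal t d)) s.
Proof. apply (@filterdiff_continuous R_AbsRing R_NormedModule U). eexists; apply line_fd. Qed.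

Lemma line_deriv {U : NormedModule R_AbsRing} (F : U -> R) (DF : U -> U -> R) (p d : U)
  (H : forall w, filterdiff F (locally w) (DF w)) (s : R) :
  is_derive (fun t => F (plus p (scal t d))) s (DF (plus p (scal s d)) d).
Proof.
  unfold is_derive. eapply filterdiff_ext_lin.
  apply (filterdiff_comp' (fun t : R => plus p (scal t d)) F s _ _ (line_fd p d s) (H _)).
  intros y; simpl. destruct (H (plus p (scal s d))) as [Hl _].
  rewrite (linear_scal _ Hl). reflexivity.
Qed.

Lemma is_derive_eq (f : R -> R) x l l' : is_derive f x l -> l = l' -> is_derive f x l'.
Proof. intros H ->; exact H. Qed.

Lemma plus_minus_cancel {G : AbelianGroup} (a b : G) : plus a (minus b a) = b.
Proof.
  unfold minus. rewrite plus_comm. rewrite <- plus_assoc. exact (eq_trans (f_equal (plus b) (plus_opp_l a)) (plus_zero_r b)).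
Qed.

Lemma sub_minus {E : ModuleSpace R_Ring} (S : E -> Prop) (x y : E) :
  subspace S -> S x -> S y -> S (minus x y).
Proof.
  intros [H0 [Hp Hs]] Hx Hy. unfold minus. apply Hp; [exact Hx|].
  pose proof (Hs (opp one) y Hy) as H. rewrite scal_opp_one in H. exact H.
Qed.


Lemma key (U V : CompleteNormedModule R_AbsRing)
  (A : U -> V -> R) (A1 : U -> U -> V -> R) (A2 : U -> U -> U -> V -> R)
  (A3 : U -> U -> U -> U -> V -> R)
  (J : U -> R) (J1 : U -> U -> R) (J2 : U -> U -> U -> R) (J3 : U -> U -> U -> U -> R)
  (HAlin : forall w, is_linear (A w))
  (HA1lin : forall w phi, is_linear (A1 w phi))
  (HA2lin : forall w phi psi, is_linear (A2 w phi psi))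
  (HA3lin : forall w phi psi chi, is_linear (A3 w phi psi chi))
  (HA1 : forall w v, filterdiff (fun w' => A w' v) (locally w) (fun phi => A1 w phi v))
  (HA2 : forall w phi v,
      filterdiff (fun w' => A1 w' phi v) (locally w) (fun psi => A2 w phi psi v))
  (HA3 : forall w phi psi v,
      filterdiff (fun w' => A2 w' phi psi v) (locally w) (fun chi => A3 w phi psi chi v))
  (HA3c : forall w phi psi chi v, continuous (fun w' => A3 w' phi psi chi v) w)
  (HJ1 : forall w, filterdiff J (locally w) (J1 w))
  (HJ2 : forall w phi, filterdiff (fun w' => J1 w' phi) (locally w) (J2 w phi))
  (HJ3 : forall w phi psi,
      filterdiff (fun w' => J2 w' phi psi) (locally w) (J3 w phi psi))
  (HJ3c : forall w phi psi chi, continuous (fun w' => J3 w' phi psi chi) w)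
  (ut : U) (zt : V) (u' : U) (z' : V)
  (H0 : A u' zt = 0) (H1 : A u' (minus z' zt) = 0)
  (H2 : A1 u' (minus u' ut) z' = J1 u' (minus u' ut)) :
  eta A J1 A1 ut zt u' z' = J u' - J ut - rho A ut zt - R3 J3 A2 A3 ut zt u' z'.
Proof.
  unfold eta, R3, rho, rho_star. cbv zeta.
  set (e := minus u' ut). set (es := minus z' zt).
  set (w := fun t : R => plus ut (scal t e)).
  assert (dJ0 : forall t, is_derive (fun t => J (w t)) t (J1 (w t) e))
    by (intro t; exact (line_deriv J J1 ut e HJ1 t)).
  assert (dJ1 : forall t, is_derive (fun t => J1 (w t) e) t (J2 (w t) e e))
    by (intro t; exact (line_deriv (fun w => J1 w e) (fun w => J2 w e) ut e (fun w => HJ2 w e) t)).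
  assert (dJ2 : forall t, is_derive (fun t => J2 (w t) e e) t (J3 (w t) e e e))
    by (intro t; exact (line_deriv (fun w => J2 w e e) (fun w => J3 w e e) ut e (fun w => HJ3 w e e) t)).
  assert (dA0 : forall v t, is_derive (fun t => A (w t) v) t (A1 (w t) e v))
    by (intros v t; exact (line_deriv (fun w => A w v) (fun w phi => A1 w phi v) ut e (fun w => HA1 w v) t)).
  assert (dA1 : forall v t, is_derive (fun t => A1 (w t) e v) t (A2 (w t) e e v))
    by (intros v t; exact (line_deriv (fun w => A1 w e v) (fun w phi => A2 w e phi v) ut e (fun w => HA2 w e v) t)).
  assert (dA2 : forall v t, is_derive (fun t => A2 (w t) e e v) t (A3 (w t) e e e v))
    by (intros v t; exact (line_deriv (fun w => A2 w e e v) (fun w phi => A3 w e e phi v) ut e (fun w => HA3 w e e v) t)).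
  set (g := fun t => J (w t) - (A (w t) zt + t * A (w t) es)).
  set (g1 := fun t => J1 (w t) e - (A1 (w t) e zt + (A (w t) es + t * A1 (w t) e es))).
  set (g2 := fun t => J2 (w t) e e - (A2 (w t) e e zt + (A1 (w t) e es + (A1 (w t) e es + t * A2 (w t) e e es)))).
  set (g3 := fun t => J3 (w t) e e e - (A3 (w t) e e e zt + (A2 (w t) e e es + (A2 (w t) e e es + (A2 (w t) e e es + t * A3 (w t) e e e es))))).
  assert (dg : forall t, is_derive g t (g1 t)).
  { intro t. eapply is_derive_eq.
    apply (is_derive_minus (fun t => J (w t)) (fun t => A (w t) zt + t * A (w t) es)).
    apply dJ0.
    apply (is_derive_plus (fun t => A (w t) zt) (fun t => t * A (w t) es)).
    apply dA0.
    apply (is_derive_mult (fun t => t) (fun t => A (w t) es)).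
    apply is_derive_id. apply dA0. intros; apply Rmult_comm.
    unfold g1, minus, plus, opp, mult, one; simpl. ring. }
  assert (dg1 : forall t, is_derive g1 t (g2 t)).
  { intro t. eapply is_derive_eq.
    apply (is_derive_minus (fun t => J1 (w t) e) (fun t => A1 (w t) e zt + (A (w t) es + t * A1 (w t) e es))).
    apply dJ1.
    apply (is_derive_plus (fun t => A1 (w t) e zt) (fun t => A (w t) es + t * A1 (w t) e es)).
    apply dA1.
    apply (is_derive_plus (fun t => A (w t) es) (fun t => t * A1 (w t) e es)).
    apply dA0.
    apply (is_derive_mult (fun t => t) (fun t => A1 (w t) e es)).
    apply is_derive_id. apply dA1. intros; apply Rmult_comm.
    unfold g2, minus, plus, opp, mult, one; simpl. ring. }
  assert (dg2 : forall t, is_derive g2 t (g3 t)).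
  { intro t. eapply is_derive_eq.
    apply (is_derive_minus (fun t => J2 (w t) e e) (fun t => A2 (w t) e e zt + (A1 (w t) e es + (A1 (w t) e es + t * A2 (w t) e e es)))).
    apply dJ2.
    apply (is_derive_plus (fun t => A2 (w t) e e zt) (fun t => A1 (w t) e es + (A1 (w t) e es + t * A2 (w t) e e es))).
    apply dA2.
    apply (is_derive_plus (fun t => A1 (w t) e es) (fun t => A1 (w t) e es + t * A2 (w t) e e es)).
    apply dA1.
    apply (is_derive_plus (fun t => A1 (w t) e es) (fun t => t * A2 (w t) e e es)).
    apply dA1.
    apply (is_derive_mult (fun t => t) (fun t => A2 (w t) e e es)).
    apply is_derive_id. apply dA2. intros; apply Rmult_comm.
    unfold g3, minus, plus, opp, mult, one; simpl. ring. }
  set (F := fun t => g2 t * (t * (t - 1)) - g1 t * (2 * t - 1) + 2 * g t).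
  assert (dp1 : forall t, is_derive (fun t => t * (t - 1)) t (2 * t - 1))
    by (intro t; auto_derive; auto; ring).
  assert (dp2 : forall t, is_derive (fun t => 2 * t - 1) t 2)
    by (intro t; auto_derive; auto; ring).
  assert (dF : forall t, is_derive F t (g3 t * (t * (t - 1)))).
  { intro t. eapply is_derive_eq.
    apply (is_derive_plus (fun t => g2 t * (t * (t - 1)) - g1 t * (2 * t - 1)) (fun t => 2 * g t)).
    apply (is_derive_minus (fun t => g2 t * (t * (t - 1))) (fun t => g1 t * (2 * t - 1))).
    apply (is_derive_mult g2 (fun t => t * (t - 1))). apply dg2. apply dp1. intros; apply Rmult_comm.
    apply (is_derive_mult g1 (fun t => 2 * t - 1)). apply dg1. apply dp2. intros; apply Rmult_comm.
    apply is_derive_scal. apply dg.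
    unfold minus, plus, opp, mult, one; simpl. ring. }
  assert (lin3 : forall s, A3 (w s) e e e (plus zt (scal s es)) = A3 (w s) e e e zt + s * A3 (w s) e e e es).
  { intro s. rewrite (linear_plus _ (HA3lin _ _ _ _)), (linear_scal _ (HA3lin _ _ _ _)). reflexivity. }
  assert (cg3 : forall t, continuous (fun s => g3 s * (s * (s - 1))) t).
  { intro t.
    assert (cJ3 : continuous (fun s => J3 (w s) e e e) t).
    { exact (continuous_comp w (fun x => J3 x e e e) t (line_cont ut e t) (HJ3c _ e e e)). }
    assert (cA3 : forall v, continuous (fun s => A3 (w s) e e e v) t).
    { intro v. exact (continuous_comp w (fun x => A3 x e e e v) t (line_cont ut e t) (HA3c _ e e e v)). }
    assert (cA2 : continuous (fun s => A2 (w s) e e es) t).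
    { apply (@ex_derive_continuous R_AbsRing R_NormedModule). eexists; apply dA2. }
    assert (cp : continuous (fun s : R => s * (s - 1)) t).
    { apply (@ex_derive_continuous R_AbsRing R_NormedModule). eexists; apply dp1. }
    apply (continuous_mult (K:=R_AbsRing) g3 (fun s => s * (s - 1))). 2: exact cp.
    unfold g3.
    apply (continuous_minus (K:=R_AbsRing) (V:=R_NormedModule) (fun s => J3 (w s) e e e) (fun s => (A3 (w s) e e e zt + (A2 (w s) e e es + (A2 (w s) e e es + (A2 (w s) e e es + s * A3 (w s) e e e es)))))).
    exact cJ3.
    apply (continuous_plus (K:=R_AbsRing) (V:=R_NormedModule) (fun s => A3 (w s) e e e zt)). apply cA3.
    apply (continuous_plus (K:=R_AbsRing) (V:=R_NormedModule) (fun s => A2 (w s) e e es)). exact cA2.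
    apply (continuous_plus (K:=R_AbsRing) (V:=R_NormedModule) (fun s => A2 (w s) e e es)). exact cA2.
    apply (continuous_plus (K:=R_AbsRing) (V:=R_NormedModule) (fun s => A2 (w s) e e es)). exact cA2.
    apply (continuous_mult (K:=R_AbsRing) (fun s => s) (fun s => A3 (w s) e e e es)).
    apply continuous_id. apply cA3. }
  assert (HI : is_RInt (fun s => (J3 (w s) e e e - A3 (w s) e e e (plus zt (scal s es)) - 3 * A2 (w s) e e es) * (s * (s - 1))) 0 1 (F 1 - F 0)).
  { apply (@is_RInt_derive R_CompleteNormedModule F).
    - intros x _. eapply is_derive_eq. apply dF. cbv beta. rewrite lin3. unfold g3. match goal with |- ?a = ?b => change (@eq R a b) end. ring.
    - intros x _. eapply continuous_ext. 2: apply cg3. intro s. cbv beta. rewrite lin3. unfold g3. match goal with |- ?a = ?b => change (@eq R a b) end. ring. }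
  pose proof (@is_RInt_unique R_CompleteNormedModule _ _ _ _ HI) as HR.
  match goal with |- context [RInt ?f 0 1] =>
    replace (RInt f 0 1) with (F 1 - F 0) by (rewrite <- HR; reflexivity) end.
  assert (w0 : w 0 = ut).
  { unfold w. exact (eq_trans (f_equal (plus ut) (scal_zero_l e)) (plus_zero_r ut)). }
  assert (w1 : w 1 = u').
  { unfold w. exact (eq_trans (f_equal (plus ut) (scal_one e)) (plus_minus_cancel ut u')). }
  assert (H2' : A1 u' e zt + A1 u' e es = J1 u' e).
  { transitivity (A1 u' e (plus zt es)).
    - symmetry; exact (linear_plus _ (HA1lin u' e) zt es).
    - transitivity (A1 u' e z'). 2: exact H2. f_equal. exact (plus_minus_cancel zt z'). }
  unfold F, g, g1, g2. rewrite w0, w1. fold e es.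
  change (minus z' zt) with es in H1. change (minus z' zt) with es. change (minus u' ut) with e. lra.
Qed.

Theorem mainTheorem7
  (U V : CompleteNormedModule R_AbsRing)
  (* the operator A : U -> V*, written A w v = A(w)(v), and its derivatives *)
  (A : U -> V -> R) (A1 : U -> U -> V -> R) (A2 : U -> U -> U -> V -> R)
  (A3 : U -> U -> U -> U -> V -> R)
  (* the functional J and its derivatives *)
  (J : U -> R) (J1 : U -> U -> R) (J2 : U -> U -> U -> R) (J3 : U -> U -> U -> U -> R)
  (* A(w), A'(w)(phi,.), ... are elements of V* (bounded linear) *)
  (HAlin : forall w, is_linear (A w))
  (HA1lin : forall w phi, is_linear (A1 w phi))
  (HA2lin : forall w phi psi, is_linear (A2 w phi psi))
  (HA3lin : forall w phi psi chi, is_linear (A3 w phi psi chi))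
  (* A is three times continuously Frechet differentiable *)
  (HA1 : forall w v, filterdiff (fun w' => A w' v) (locally w) (fun phi => A1 w phi v))
  (HA2 : forall w phi v,
      filterdiff (fun w' => A1 w' phi v) (locally w) (fun psi => A2 w phi psi v))
  (HA3 : forall w phi psi v,
      filterdiff (fun w' => A2 w' phi psi v) (locally w) (fun chi => A3 w phi psi chi v))
  (HA3c : forall w phi psi chi v, continuous (fun w' => A3 w' phi psi chi v) w)
  (* J is three times continuously Frechet differentiable *)
  (HJ1 : forall w, filterdiff J (locally w) (J1 w))
  (HJ2 : forall w phi, filterdiff (fun w' => J1 w' phi) (locally w) (J2 w phi))
  (HJ3 : forall w phi psi,
      filterdiff (fun w' => J2 w' phi psi) (locally w) (J3 w phi psi))
  (HJ3c : forall w phi psi chi, continuous (fun w' => J3 w' phi psi chi) w)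
  (* primal and adjoint solutions *)
  (u : U) (z : V)
  (Hu : forall v, A u v = 0)
  (Hz : forall phi, A1 u phi z = J1 u phi)
  (* finite-dimensional discrete spaces and discrete solutions *)
  (Uh2 : U -> Prop) (Vh2 : V -> Prop)
  (HUh2 : fin_dim_subspace Uh2) (HVh2 : fin_dim_subspace Vh2)
  (uh2 : U) (zh2 : V)
  (Huh2mem : Uh2 uh2) (Huh2 : forall v, Vh2 v -> A uh2 v = 0)
  (Hzh2mem : Vh2 zh2) (Hzh2 : forall phi, Uh2 phi -> A1 uh2 phi zh2 = J1 uh2 phi)
  (* arbitrary fixed discrete elements *)
  (ut : U) (zt : V) (Hut : Uh2 ut) (Hzt : Vh2 zt) :
  let etah := eta A J1 A1 ut zt u z in
  let etah2 := eta A J1 A1 ut zt uh2 zh2 in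
  let R3e := R3 J3 A2 A3 ut zt u z in
  let R3e2 := R3 J3 A2 A3 ut zt uh2 zh2 in
  (Rabs (J u - J uh2) - Rabs (R3e - R3e2) <= Rabs (etah - etah2) /\
   Rabs (etah - etah2) <= Rabs (J u - J uh2) + Rabs (R3e - R3e2)) /\
  (Rabs (J u - J ut) - Rabs (rho A ut zt) - Rabs R3e <= Rabs etah /\
   Rabs etah <= Rabs (J u - J ut) + Rabs (rho A ut zt) + Rabs R3e).

Proof.
  intros etah etah2 R3e R3e2.
  destruct HUh2 as [SU _]. destruct HVh2 as [SV _].
  assert (K1 : etah = J u - J ut - rho A ut zt - R3e).
  { apply (key U V A A1 A2 A3 J J1 J2 J3); auto. }
  assert (K2 : etah2 = J uh2 - J ut - rho A ut zt - R3e2).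
  { apply (key U V A A1 A2 A3 J J1 J2 J3); auto.
    - apply Huh2. exact (sub_minus Vh2 zh2 zt SV Hzh2mem Hzt).
    - apply Hzh2. exact (sub_minus Uh2 uh2 ut SU Huh2mem Hut). }
  rewrite K1, K2.
  split; split; split_Rabs; lra.
Qed.
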